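(* Let $\mathbf{t}$ be the Tribonacci sequence, fixed point of $0\mapsto01$, $1\mapsto02$, $2\mapsto0$. For each $k\ge1$, the sequence $\mathbf{t}$ is totally $(k,1)$-unbalanced.
   Context: For positive integers $k,C$, a sequence $\mathbf{x}$ is totally $(k,C)$-unbalanced if for every length-$k$ factor $w$ of $\mathbf{x}$ there exist two factors $u,v$ of $\mathbf{x}$ with $|u|=|v|$ and $||u|_w-|v|_w|>C$, where $|u|_w$ is the number of (possibly overlapping) occurrences of $w$ in $u$. *)

(* Defs.v *)
From mathcomp Require Import all_boot all_order all_algebra.
Set Implicit Arguments. Unset Strict Implicit. Unset Printing Implicit Defensive.

Definition factor (x : nat -> nat) (w : seq nat) : Prop :=
  exists i, w = mkseq (fun j => x (i + j)) (size w).

Definition occ (u w : seq nat) : nat :=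
  count (fun i => (i + size w <= size u) && (take (size w) (drop i u) == w))
        (iota 0 (size u).+1).

Definition totally_unbalanced (x : nat -> nat) (k C : nat) : Prop :=
  forall w : seq nat, size w = k -> factor x w ->
    exists u v : seq nat,
      [/\ factor x u, factor x v, size u = size v &
          (C < `|occ u w - occ v w|)%N].

Definition trib_sigma (a : nat) : seq nat :=
  match a with 0 => [:: 0; 1] | 1 => [:: 0; 2] | _ => [:: 0] end.

Definition trib_iter (n : nat) : seq nat :=
  iter n (fun s => flatten (map trib_sigma s)) [:: 0].

(* The Tribonacci word t = lim sigma^n(0); sigma^(i+1)(0) has length > i. *)
Definition tribonacci (i : nat) : nat := nth 0 (trib_iter i.+1) i.

(* Main.v *)
Require Import Defs.
From mathcomp Require Import all_boot all_order all_algebra.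
From mathcomp Require Import zify.
Set Implicit Arguments. Unset Strict Implicit. Unset Printing Implicit Defensive.

Definition sig (s : seq nat) := flatten (map trib_sigma s).
Definition sub p L := mkseq (fun j => tribonacci (p + j)) L.
Definition P j := sub 0 j.
Definition phi j := size (sig (P j)).

Lemma sig_cat s r : sig (s ++ r) = sig s ++ sig r.
Proof. by rewrite /sig map_cat flatten_cat. Qed.
Lemma sig_cons a s : sig (a :: s) = trib_sigma a ++ sig s.
Proof. by []. Qed.
Lemma sig1 a : sig [:: a] = trib_sigma a.
Proof. by rewrite sig_cons cats0. Qed.
Lemma trib_iterS m : trib_iter m.+1 = sig (trib_iter m).
Proof. by rewrite /trib_iter iterS. Qed.
Lemma trib_iter_head m : exists r, trib_iter m = 0 :: r.
Proof.
elim: m => [|m [r IH]]; first by exists [::].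
by rewrite trib_iterS IH sig_cons /=; eexists.
Qed.
Lemma size_sigma a : 0 < size (trib_sigma a) <= 2.
Proof. by case: a => [|[|a]]. Qed.
Lemma size_sig s : size s <= size (sig s).
Proof.
elim: s => //= a s IH; rewrite sig_cons size_cat; have := size_sigma a; lia.
Qed.
Lemma size_trib_iter m : m < size (trib_iter m).
Proof.
elim: m => [|m IH] //; rewrite trib_iterS.
case: (trib_iter_head m) => r E; rewrite E in IH *.
rewrite sig_cons /= ; have := size_sig r; move: IH => /=; lia.
Qed.
Lemma trib_iter_prefix m d : exists r, trib_iter (m + d) = trib_iter m ++ r.
Proof.
elim: m => [|m [r IH]].
  by case: (trib_iter_head d) => r E; exists r; rewrite add0n E.
by rewrite addSn !trib_iterS IH sig_cat; eexists.
Qed.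
Lemma le2_iter m : all (fun a => a <= 2) (trib_iter m).
Proof.
elim: m => [|m IH] //; rewrite trib_iterS.
elim: (trib_iter m) IH => //= a s IHs /andP [Ha Hs].
rewrite sig_cons all_cat IHs // andbT.
by case: a Ha => [|[|[|a]]].
Qed.
Lemma tri_nth m i : i < size (trib_iter m) -> tribonacci i = nth 0 (trib_iter m) i.
Proof.
move=> Hi; rewrite /tribonacci.
case: (trib_iter_prefix m i.+1) => r1 E1.
case: (trib_iter_prefix i.+1 m) => r2 E2.
rewrite addnC E2 in E1.
have Hs := size_trib_iter i.+1.
have : nth 0 (trib_iter i.+1 ++ r2) i = nth 0 (trib_iter m ++ r1) i by rewrite E1.
by rewrite !nth_cat Hi (ltnW Hs).
Qed.
Lemma t_le2 i : tribonacci i <= 2.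
Proof.
have Hs := size_trib_iter i.+1.
rewrite /tribonacci; have /allP := le2_iter i.+1; apply.
by apply: mem_nth; exact: ltnW Hs.
Qed.
Lemma size_sub p L : size (sub p L) = L.
Proof. by rewrite size_mkseq. Qed.
Lemma nth_sub p L j : j < L -> nth 0 (sub p L) j = tribonacci (p + j).
Proof. by move=> h; rewrite nth_mkseq. Qed.
Lemma sub_add p a b : sub p (a + b) = sub p a ++ sub (p + a) b.
Proof.
apply: (@eq_from_nth _ 0); first by rewrite size_cat !size_sub.
move=> i; rewrite size_sub => Hi; rewrite nth_cat size_sub nth_sub //.
case: ltnP => h; first by rewrite nth_sub.
by rewrite nth_sub; [rewrite -addnA subnKC | lia].
Qed.
Lemma sub1 p : sub p 1 = [:: tribonacci p].
Proof. by rewrite /sub /mkseq /= addn0. Qed.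
Lemma sub_S p L : sub p L.+1 = tribonacci p :: sub p.+1 L.
Proof. by rewrite -add1n sub_add sub1 addn1. Qed.
Lemma all_sub p L : all (fun a => a <= 2) (sub p L).
Proof. by apply/allP => a /mapP [j _ ->]; apply: t_le2. Qed.

Lemma P_prefix s r m : trib_iter m = s ++ r -> P (size s) = s.
Proof.
move=> E; apply: (@eq_from_nth _ 0); first by rewrite size_sub.
move=> i; rewrite size_sub => Hi.
rewrite nth_sub // add0n (tri_nth (m := m)); last by rewrite E size_cat; lia.
by rewrite E nth_cat Hi.
Qed.
Lemma P_phi j : P (phi j) = sig (P j).
Proof.
have Hs := size_trib_iter j.
have Ej : P j = take j (trib_iter j).
  have := P_prefix (esym (cat_take_drop j (trib_iter j))).
  by rewrite size_take Hs.
apply: (@P_prefix _ (sig (drop j (trib_iter j))) j.+1).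
by rewrite trib_iterS -{1}(cat_take_drop j (trib_iter j)) sig_cat Ej.
Qed.

Lemma cat_inj2 (s1 s2 s3 s4 : seq nat) :
  s1 ++ s2 = s3 ++ s4 -> size s1 = size s3 -> s1 = s3 /\ s2 = s4.
Proof.
move=> E Hs; have := eqseq_cat s2 s4 Hs; rewrite E eqxx.
by move/esym/andP => [/eqP -> /eqP ->].
Qed.

Lemma phi_add j L : phi (j + L) = phi j + size (sig (sub j L)) /\
  sub (phi j) (size (sig (sub j L))) = sig (sub j L).
Proof.
have EP : P (j + L) = P j ++ sub j L by rewrite /P sub_add.
have E1 : phi (j + L) = phi j + size (sig (sub j L)).
  by rewrite /phi EP sig_cat size_cat.
split => //.
have H := P_phi (j + L); rewrite E1 in H.
have H1 : P (phi j + size (sig (sub j L))) = P (phi j) ++ sub (phi j) (size (sig (sub j L))).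
  by rewrite /P sub_add.
rewrite H1 P_phi EP sig_cat in H.
by have [] := cat_inj2 H.
Qed.

Lemma phi0 : phi 0 = 0.
Proof. by []. Qed.

Lemma phi_step q : phi q.+1 = phi q + size (trib_sigma (tribonacci q)).
Proof. by rewrite -addn1 (phi_add q 1).1 sub1 sig1. Qed.

Lemma block q j : j < size (trib_sigma (tribonacci q)) ->
  tribonacci (phi q + j) = nth 0 (trib_sigma (tribonacci q)) j.
Proof.
move=> Hj; have [_ E] := phi_add q 1.
rewrite sub1 sig1 in E.
by rewrite -[in RHS]E nth_sub.
Qed.

Lemma t_phi q : tribonacci (phi q) = 0.
Proof.
have := @block q 0; rewrite addn0 => ->; last by have := size_sigma (tribonacci q); lia.
by case: (tribonacci q) => [|[|]].
Qed.

Lemma t_phi1 q : tribonacci (phi q).+1 =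
  if tribonacci q == 2 then 0 else (tribonacci q).+1.
Proof.
have := t_le2 q; case E: (tribonacci q) => [|[|[|n]]] // _.
- by rewrite -addn1 block E.
- by rewrite -addn1 block E.
- by have := phi_step q; rewrite E /= addn1 => <-; exact: t_phi.
Qed.

Lemma len_t q : size (trib_sigma (tribonacci q)) = if tribonacci q < 2 then 2 else 1.
Proof. by have := t_le2 q; case: (tribonacci q) => [|[|[|n]]]. Qed.

Lemma inblock p : exists q, phi q <= p < phi q.+1.
Proof.
elim: p => [|p [q Hq]]; first by exists 0; rewrite phi_step phi0; have := size_sigma (tribonacci 0); lia.
case: (ltnP p.+1 (phi q.+1)) => h; first by exists q; lia.
exists q.+1; rewrite (phi_step q.+1); have := size_sigma (tribonacci q.+1); lia.
Qed.

Lemma phi_surj p : tribonacci p = 0 -> exists q, phi q = p.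
Proof.
case: (inblock p) => q Hq Ht; exists q.
move: Hq; rewrite phi_step len_t => Hq.
case: (phi q =P p) => // Hne.
have Ep : p = (phi q).+1 by move: Hq; case: ifP => _; lia.
rewrite Ep t_phi1 in Ht; rewrite Ep in Hq.
by move: Ht Hq; have := t_le2 q; case: (tribonacci q) => [|[|[|n]]] //=; lia.
Qed.

Lemma pred_zero p : 0 < tribonacci p -> exists p', p = p'.+1 /\ tribonacci p' = 0.
Proof.
case: (inblock p) => q Hq Ht.
move: Hq; rewrite phi_step len_t => Hq.
case: (phi q =P p) => [E|Hne]; first by rewrite -E t_phi in Ht.
exists (phi q); split; last exact: t_phi.
by move: Hq; case: ifP => _; lia.
Qed.

Lemma parse_sig w1 e q : all (fun a => a <= 2) w1 ->
  (e == [:: 0]) || (last 2 w1 < 2) ->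
  sub (phi q) (size (sig w1 ++ e)) = sig w1 ++ e -> sub q (size w1) = w1.
Proof.
elim: w1 q => [|a w1 IH] q //= /andP [Ha Hall] Hc H.
rewrite sub_S.
have Hnth : nth 0 (trib_sigma a ++ sig w1 ++ e) 1 =
    (if a == 2 then 0 else a.+1) /\ 1 < size (trib_sigma a ++ sig w1 ++ e).
  case: w1 {IH Hall H} Hc => [|b s] Hc.
    case: a Ha Hc => [|[|[|n]]] //= _.
    by case/orP => [/eqP -> //|//].
  rewrite sig_cons.
  by case: a Ha {Hc} => [|[|[|n]]] //= _; case: b => [|[|]].
case: Hnth => Hnth Hsz.
rewrite sig_cons -catA in H.
have Ht : tribonacci q = a.
  have := t_phi1 q; rewrite -addn1 -(@nth_sub (phi q) _ 1 Hsz).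
  rewrite H Hnth; have := t_le2 q.
  by case: (tribonacci q) => [|[|[|n]]]; case: a Ha {Hnth Hc H Hsz} => [|[|[|m]]].
rewrite Ht; congr cons.
case: w1 IH Hall Hc H {Hnth Hsz} => [|b s] IH Hall Hc H; first by [].
apply: IH => //.
rewrite size_cat sub_add in H.
have [_ H2] := cat_inj2 H (size_sub _ _).
by move: H2; rewrite phi_step Ht !size_cat.
Qed.

Lemma decomp m q : 0 < m -> exists L, (phi (q+L)).+1 = phi q + m \/
  ((phi (q+L)).+2 = phi q + m /\ tribonacci (q+L) < 2).
Proof.
elim/ltn_ind: m q => m IH q Hm.
have S := phi_step q; rewrite len_t in S.
case: (ltnP m 2) => Hm2.
  by exists 0; left; rewrite addn0; lia.
case: (boolP (tribonacci q < 2)) => Ht; [rewrite Ht in S|rewrite (negbTE Ht) in S].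
  case: (m =P 2) => Hm2'.
    by exists 0; right; rewrite addn0; lia.
  have H1 : m - 2 < m by lia.
  have H2 : 0 < m - 2 by lia.
  have [L HL] := IH (m - 2) H1 q.+1 H2.
  by exists L.+1; rewrite addnS -addSn; lia.
have H1 : m - 1 < m by lia.
  have H2 : 0 < m - 1 by lia.
  have [L HL] := IH (m - 1) H1 q.+1 H2.
by exists L.+1; rewrite addnS -addSn; lia.
Qed.

Lemma head_sub q L : head 0 (sub q L) <= tribonacci q.
Proof. by case: L => [|L] //; rewrite sub_S. Qed.

Lemma decompw p m : tribonacci p = 0 -> 0 < m -> exists q w1 e,
  [/\ phi q = p, sub q (size w1) = w1, sub p m = sig w1 ++ e,
      (e = [::] \/ e = [:: 0]) & (e == [:: 0]) || (last 2 w1 < 2)] /\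
  size w1 < m /\ head 0 w1 <= tribonacci q.
Proof.
move=> Hp Hm; have [q Hq] := phi_surj Hp.
have [L [HL|[HL Ht]]] := decomp q Hm.
- exists q, (sub q L), [:: 0]; rewrite size_sub; split; last split.
  + split => //; last by right.
    have [E1 E2] := phi_add q L.
    have -> : m = size (sig (sub q L)) + 1 by lia.
    by rewrite sub_add sub1 -Hq E2 -E1 t_phi.
  + have [E1 _] := phi_add q L; have := size_sig (sub q L); rewrite size_sub; lia.
  + exact: head_sub.
- exists q, (sub q L.+1), [::]; rewrite size_sub; split; last split.
  + split => //.
    * have [E1 E2] := phi_add q L.+1.
      have S := phi_step (q + L); rewrite len_t Ht -addnS in S.
      by rewrite cats0 -Hq -E2; congr sub; lia.
    * by left.
    * by rewrite -[L.+1]addn1 sub_add sub1 last_cat /=.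
  + have [E1 _] := phi_add q L; have := size_sig (sub q L); rewrite size_sub.
    have S := phi_step (q + L); rewrite len_t Ht in S; lia.
  + exact: head_sub.
Qed.

Definition J (w : seq nat) : Prop := exists n x,
  [/\ (w != [::] -> 0 < n),
      (forall i, sub (iter n phi i) (size x + size w) = x ++ w) &
      (forall p, sub p (size w) = w -> exists i, p = iter n phi i + size x)].

Lemma J_nil : J [::].
Proof.
exists 0, [::]; split => // p _; by exists p; rewrite addn0.
Qed.

Lemma head0 w1 e : (e = [::] \/ e = [:: 0]) -> (e == [:: 0]) || (last 2 w1 < 2) ->
  0 < size (sig w1 ++ e) /\ nth 0 (sig w1 ++ e) 0 = 0.
Proof.
case: w1 => [|b s] He Hc.
  by case: He Hc => -> .
by rewrite sig_cons; case: b {Hc} => [|[|]].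
Qed.

Lemma J_sig w1 e : (exists q0, sub q0 (size w1) = w1) -> (e = [::] \/ e = [:: 0]) ->
  (e == [:: 0]) || (last 2 w1 < 2) -> J w1 -> J (sig w1 ++ e).
Proof.
move=> [q0 Hq0] He Hc [n [x [Hpos H1 H2]]].
exists n.+1, (sig x); split => //.
- move=> i; set j := iter n phi i.
  rewrite iterS -/j.
  have [E1 E2] := phi_add j (size x + size w1).
  rewrite H1 sig_cat in E1 E2.
  case: He => ->.
  + by rewrite cats0 -size_cat.
  + rewrite size_cat addnA -size_cat sub_add E2 -E1 /= sub1 t_phi catA.
    by [].
- move=> p Hp.
  have [Hs Hn] := head0 He Hc.
  have Ht : tribonacci p = 0 by rewrite -(addn0 p) -(@nth_sub p _ 0 Hs) Hp.
  have [q Hq] := phi_surj Ht.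
  have Hw1 : sub q (size w1) = w1.
    apply: (@parse_sig w1 e q) => //; last by rewrite Hq.
    by rewrite -Hq0; exact: all_sub.
  have [i Hi] := H2 q Hw1.
  exists i; rewrite -Hq Hi iterS.
  have [E1 _] := phi_add (iter n phi i) (size x).
  have Hx : sub (iter n phi i) (size x) = x.
    have := H1 i; rewrite sub_add => /cat_inj2 [] //; by rewrite size_sub.
  by rewrite E1 Hx.
Qed.

Lemma J_pre a w : 0 < a -> J (0 :: a :: w) -> J (a :: w).
Proof.
move=> Ha [n [x [Hpos H1 H2]]].
exists n, (rcons x 0); split.
- by move=> _; apply: Hpos.
- by move=> i; rewrite size_rcons cat_rcons addSnnS; apply: H1.
- move=> p Hp.
  have Ht : 0 < tribonacci p by rewrite -(addn0 p) -(@nth_sub p (size (a :: w)) 0 isT) Hp.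
  have [p' [Ep Hp']] := pred_zero Ht.
  have Hs : sub p' (size (0 :: a :: w)) = 0 :: a :: w.
    by rewrite /= sub_S Hp' -Ep Hp.
  have [i Hi] := H2 p' Hs.
  by exists i; rewrite size_rcons addnS Ep Hi.
Qed.

Lemma J_all w : (exists p, sub p (size w) = w) -> J w.
Proof.
move: {2}(3 * size w + head 0 w).+1 (ltnSn (3 * size w + head 0 w)) => N.
elim: N w => [|N IH] w HN [p Hp]; first by [].
case: w HN Hp => [|c w] HN Hp; first exact: J_nil.
have Hc : tribonacci p = c.
  by rewrite -(addn0 p) -(@nth_sub p (size (c :: w)) 0 isT) Hp.
case: (posnP c) => [c0|cpos].
- rewrite c0 in Hc Hp HN *.
  have [q [w1 [e [[Hq Hw1 Hsp He Hce] [Hsz Hhd]]]]] := @decompw p (size (0 :: w)) Hc isT.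
  rewrite Hp in Hsp; rewrite Hsp.
  apply: J_sig => //; first by exists q.
  apply: IH; last by exists q.
  move: Hsz HN Hhd; have := t_le2 q; rewrite /=; lia.
- have Hc' : 0 < tribonacci p by rewrite Hc.
  have [p' [Ep Hp']] := pred_zero Hc'.
  have Hs0 : sub p' (size (0 :: c :: w)) = 0 :: c :: w.
    by rewrite /= sub_S Hp' -Ep Hp.
  have [q [w1 [e [[Hq Hw1 Hsp He Hce] [Hsz Hhd]]]]] := @decompw p' (size (0 :: c :: w)) Hp' isT.
  apply: J_pre => //.
  rewrite Hs0 in Hsp; rewrite Hsp.
  apply: J_sig => //; first by exists q.
  apply: IH; last by exists q.
  have Htq := t_phi1 q; rewrite Hq -Ep Hc in Htq.
  move: Hsz HN Hhd Htq cpos; have := t_le2 q; rewrite /=.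
  case: (tribonacci q == 2); lia.
Qed.

Lemma iter_sig_cat n s r : iter n sig (s ++ r) = iter n sig s ++ iter n sig r.
Proof. by elim: n => [|n IH] //=; rewrite IH sig_cat. Qed.

Definition ln n s := size (iter n sig s).

Lemma F_P n j : iter n phi j = ln n (P j).
Proof.
elim: n j => [|n IH] j; first by rewrite /ln /= size_sub.
by rewrite iterSr IH P_phi /ln iterSr.
Qed.

Lemma F_add n j m : iter n phi (j + m) = iter n phi j + ln n (sub j m).
Proof. by rewrite !F_P /ln /P sub_add add0n iter_sig_cat size_cat. Qed.

Lemma ln_ge n s : size s <= ln n s.
Proof.
elim: n => [|n IH] //; rewrite /ln iterS; apply: leq_trans IH (size_sig _).
Qed.

Lemma ln_cons2 n a b s : ln n [:: a, b & s] = ln n [:: a] + ln n (b :: s).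
Proof. by rewrite /ln -cat1s iter_sig_cat size_cat. Qed.

Lemma ln_S1 n a : ln n.+1 [:: a] = ln n (trib_sigma a).
Proof. by rewrite /ln iterSr sig1. Qed.

Lemma lbounds n : 0 < n ->
  [/\ ln n [:: 2] + 1 <= ln n [:: 1], ln n [:: 1] <= ln n [:: 0] & 1 <= ln n [:: 2]].
Proof.
case: n => [|n] // _; elim: n => [|n [IH1 IH2 IH3]]; first by [].
rewrite !(ln_S1 n.+1); cbn [trib_sigma]; rewrite !ln_cons2; split; lia.
Qed.

Lemma sub_iter m p L : p + L <= size (trib_iter m) ->
  sub p L = take L (drop p (trib_iter m)).
Proof.
move=> H; apply: (@eq_from_nth _ 0).
  rewrite size_sub size_take size_drop; case: ltnP; lia.
move=> i; rewrite size_sub => Hi.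
rewrite nth_sub // nth_take // nth_drop (tri_nth (m := m)) //; lia.
Qed.

Lemma gap n : 0 < n -> ln n (sub 23 5) + 2 <= ln n (sub 4 5).
Proof.
move=> Hn.
have Hs : size (trib_iter 8) = 149 by vm_compute.
rewrite (@sub_iter 8 23 5) ?Hs // (@sub_iter 8 4 5) ?Hs //.
have -> : take 5 (drop 23 (trib_iter 8)) = [:: 2; 0; 1; 0; 2] by vm_compute.
have -> : take 5 (drop 4 (trib_iter 8)) = [:: 0; 1; 0; 0; 1] by vm_compute.
rewrite !ln_cons2; have [] := lbounds Hn; lia.
Qed.

Lemma count_none (Q : pred nat) s0 d :
  (forall y, s0 <= y < s0 + d -> ~~ Q y) -> count Q (iota s0 d) = 0.
Proof.
move=> H; apply/eqP; rewrite eqn0Ngt -has_count; apply/hasPn => y.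
by rewrite mem_iota; apply: H.
Qed.

Lemma count_split (Q : pred nat) s N :
  count Q (iota s N) = count Q (iota 0 (s + N)) - count Q (iota 0 s).
Proof. by rewrite iotaD count_cat add0n addKn. Qed.

Lemma count_succ (Q : pred nat) y :
  count Q (iota 0 y.+1) = count Q (iota 0 y) + Q y.
Proof. by rewrite -addn1 iotaD count_cat /= addn0. Qed.

Lemma count_mono (Q : pred nat) y y' : y <= y' ->
  count Q (iota 0 y) <= count Q (iota 0 y').
Proof. by move=> h; rewrite -(subnKC h) iotaD count_cat leq_addr. Qed.

Lemma count_F (Q : pred nat) (F : nat -> nat) c : F 0 = 0 ->
  (forall i, F i < F i.+1) -> (forall y, Q y <-> exists i, y = F i + c) ->
  forall i, count Q (iota 0 (F i + c)) = i.
Proof.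
move=> F0 Fs HQ.
have Fm : forall i j, i <= j -> F i <= F j.
  move=> i j /subnKC <-; elim: (j - i) => [|d IH]; first by rewrite addn0.
  by rewrite addnS; apply: leq_trans IH (ltnW (Fs _)).
elim => [|i IH].
  rewrite F0 add0n count_none // => y /andP [_ Hy]; apply/negP => /HQ [j Hj].
  lia.
have Hd : F i.+1 + c = (F i + c) + (F i.+1 - F i).-1.+1 by have := Fs i; lia.
rewrite Hd iotaD count_cat IH /= add0n.
have -> : Q (F i + c) by apply/HQ; exists i.
rewrite count_none; first by rewrite addn0 addn1.
move=> y /andP [Hy1 Hy2]; apply/negP => /HQ [j Hj].
case: (leqP j i) => hj.
  by have := Fm _ _ hj; lia.
have := Fm _ _ hj; lia.
Qed.

Lemma occ_sub s L w : size w <= L ->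
  occ (sub s L) w = count (fun j => sub j (size w) == w) (iota s (L - size w).+1).
Proof.
move=> Hk; rewrite /occ size_sub.
have -> : L.+1 = (L - size w).+1 + size w by lia.
rewrite iotaD count_cat add0n.
rewrite (@count_none _ (L - size w).+1); last first.
  move=> y; case/andP => Hy _; apply/negP; rewrite /=; case/andP => H _; lia.
rewrite addn0 -[s]addn0 iotaDl count_map.
apply: eq_in_count => i; rewrite mem_iota => /andP [_ Hi] /=.
have Hik : i + size w <= L by lia.
rewrite Hik /=; congr (_ == _).
have -> : L = i + (size w + (L - i - size w)) by lia.
rewrite sub_add sub_add drop_size_cat ?size_sub // take_size_cat ?size_sub //.
by rewrite addn0.
Qed.

Lemma iter_phi0 n : iter n phi 0 = 0.
Proof. by elim: n => //= n ->. Qed.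

Theorem theorem23 : forall k : nat, (1 <= k)%N -> totally_unbalanced tribonacci k 1.
Proof.
move=> k Hk w Hw [i0 Hi0].
have [n [x [Hpos H1 H2]]] := J_all (ex_intro _ i0 (esym Hi0)).
have Hn : 0 < n by apply: Hpos; apply/eqP => E; rewrite E in Hw; rewrite -Hw in Hk.
set F := iter n phi.
set c := size x.
set Q := fun j => sub j (size w) == w.
have HQ : forall y, Q y <-> exists i, y = F i + c.
  move=> y; split; first by move/eqP/H2.
  move=> [i ->]; apply/eqP.
  have := H1 i; rewrite sub_add => /cat_inj2 [] //; by rewrite size_sub.
have F0 : F 0 = 0 by apply: iter_phi0.
have Fs : forall i, F i < F i.+1.
  move=> i; rewrite /F -[i.+1]addn1 F_add; have := ln_ge n (sub i 1); rewrite size_sub; lia.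
have CF := count_F F0 Fs HQ.
have Fa := F_add n 23 5; have Fb := F_add n 4 5.
have Hgap := gap Hn.
set l := ln n (sub 23 5) in Fa Hgap.
exists (sub (F 23 + c) (l + size w)), (sub (F 4 + c).+1 (l + size w)).
split.
- by exists (F 23 + c); rewrite /sub size_mkseq.
- by exists (F 4 + c).+1; rewrite /sub size_mkseq.
- by rewrite !size_sub.
have Ou : occ (sub (F 23 + c) (l + size w)) w = 6.
  rewrite occ_sub ?leq_addl // count_split -/Q.
  have -> : F 23 + c + (l + size w - size w).+1 = (F 28 + c).+1 by rewrite /F Fa; lia.
  by rewrite count_succ !CF (_ : Q (F 28 + c)) //; apply/HQ; exists 28.
have Ov : occ (sub (F 4 + c).+1 (l + size w)) w <= 4.
  rewrite occ_sub ?leq_addl // count_split -/Q count_succ CF.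
  have := @count_mono Q ((F 4 + c).+1 + (l + size w - size w).+1) (F 9 + c).
  rewrite CF; have -> : Q (F 4 + c) by apply/HQ; exists 4.
  move=> h; have := h _; rewrite /F Fb in h *; lia.
rewrite Ou; lia.
Qed.
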